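(* Let $(\Omega,\mathcal{F},P)=([0,1],\mathcal{B}([0,1]),\lambda)$ with $\lambda$ Lebesgue measure, and let $(\varepsilon_n)\subset(0,1)$ with $\varepsilon_n\to0$ be such that $E[S^n_1]=1$ for all $n$, where for each $n$ the process $S^n$ is given by $S^n_t=0$ for $t\in[0,1)$ and $S^n_1(\omega)=-\frac{1}{\sqrt{\omega}}$ on $[0,\varepsilon_n)$, $S^n_1(\omega)=\frac{1}{(1-\omega)^{1/(n+1)}}$ on $[\varepsilon_n,1]$; the filtration is the one generated by $(S^n)_{n\in\mathbb{N}}$. Then there exists an equivalent separating measure for $\mathcal{X}$ (namely $P=\lambda$ itself: $E_P[X_1]\le0$ for all $X\in\mathcal{X}$), but there is no equivalent martingale measure, i.e. no $Q\sim P$ with $E_Q[S^n_1]=0$ for all $n$.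
   Context: For this market, $\mathcal{X}^n_1$ denotes the set of stochastic integrals $(\mathbf{H}\bullet\mathbf{S}^n)$, $\mathbf{S}^n=(S^1,\dots,S^n)$, with $\mathbf{H}$ $\mathbb{R}^n$-valued predictable $\mathbf{S}^n$-integrable and $(\mathbf{H}\bullet\mathbf{S}^n)_t\ge-1$ for all $t$; $\mathcal{X}_1$ is the closure of $\bigcup_{n\ge1}\mathcal{X}^n_1$ in the Emery topology (metric $d_{\mathbb{S}}(X,Y)=\sup_{K}E[\sup_{t\le1}|(K\bullet(X-Y))_t|\wedge1]$ over simple predictable $K$, $\|K\|_\infty\le1$), and $\mathcal{X}=\bigcup_{\lambda>0}\lambda\mathcal{X}_1$. *)

(* Defs.v *)
From mathcomp Require Import all_boot all_order all_algebra.
From mathcomp Require Import all_classical all_reals all_analysis.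
Set Implicit Arguments. Unset Strict Implicit. Unset Printing Implicit Defensive.
Import Order.TTheory GRing.Theory Num.Theory.
Import numFieldNormedType.Exports.
Local Open Scope classical_set_scope.
Local Open Scope ring_scope.

Section Market.
Variable R : realType.

(* P = Lebesgue measure restricted to [0,1] (so P lives on [0,1]).         *)
Definition Omega := measurableTypeR R.

Definition Pm : {measure set Omega -> \bar R} :=
  mrestr (@lebesgue_measure R) (measurable_itv (`[0, 1] : interval R)).

Definition unit01 : set R := `[0, 1].

Definition process := R -> Omega -> R.

(* Terminal value S^{n+1}_1 of the paper (0-based index n corresponds to  *)
(* the paper's S^{n+1}); values outside [0,1] are irrelevant (P-null).     *)
Definition S1 (eps : nat -> R) (n : nat) (w : Omega) : R :=
  if (0 <= w) && (w < eps n) then - (Num.sqrt w)^-1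
  else if (eps n <= w) && (w <= 1) then ((1 - w) `^ (n.+2%:R)^-1)^-1
  else 0.

Definition S (eps : nat -> R) (n : nat) : process :=
  fun t w => if t < 1 then 0 else S1 eps n w.

Definition meas_wrt (G : set (set Omega)) (f : Omega -> R) :=
  forall B : set (measurableTypeR R), measurable B -> G (f @^-1` B).

Definition filt (eps : nat -> R) (t : R) : set (set Omega) :=
  <<s [set A | exists n s (B : set (measurableTypeR R)),
         [/\ s <= t, measurable B & A = S eps n s @^-1` B] ] >>.

Definition stopping_time (eps : nat -> R) (T : Omega -> R) :=
  (forall w, 0 <= T w <= 1) /\ forall t, filt eps t [set w | T w <= t].

Definition filt_at (eps : nat -> R) (T : Omega -> R) : set (set Omega) :=
  [set A | forall t, filt eps t (A `&` [set w | T w <= t])].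

(*   K = K0 1_{0} + sum_{i<m} Ki i 1_{(T i, T (i+1)]}                       *)
Record simple_pred (eps : nat -> R) := SimplePred {
  sp_m : nat;
  sp_T : nat -> Omega -> R;
  sp_K0 : Omega -> R;
  sp_K : nat -> Omega -> R;
  sp_T_stop : forall i, (i <= sp_m)%N -> stopping_time eps (sp_T i);
  sp_T_incr : forall i w, (i < sp_m)%N -> sp_T i w <= sp_T i.+1 w;
  sp_K0_meas : meas_wrt (filt eps 0) sp_K0;
  sp_K0_bd : forall w, `|sp_K0 w| <= 1;
  sp_K_meas : forall i, (i < sp_m)%N -> meas_wrt (filt_at eps (sp_T i)) (sp_K i);
  sp_K_bd : forall i w, `|sp_K i w| <= 1 }.

Definition simple_int (eps : nat -> R) (K : simple_pred eps) (Z : process)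
  : process := fun t w =>
  sp_K0 K w * Z 0 w +
  \sum_(i < sp_m K) sp_K K i w *
     (Z (Order.min (sp_T K i.+1 w) t) w - Z (Order.min (sp_T K i w) t) w).

Definition emery_dist (eps : nat -> R) (X Y : process) : \bar R :=
  ereal_sup [set (\int[Pm]_w
      (Order.min (ereal_sup [set (`| simple_int K (fun t w => X t w - Y t w) t w |)%:E
                              | t in unit01]) 1))%E
    | K in [set: simple_pred eps]].

Definition pred_rects (eps : nat -> R) : set (set (R * Omega)) :=
  [set C | (exists A, filt eps 0 A /\ C = [set 0] `*` A) \/
           (exists s t A, [/\ 0 <= s, s < t, t <= 1, filt eps s A &
                              C = `]s, t] `*` A])].

Definition predictable_sets (eps : nat -> R) : set (set (R * Omega)) :=
  <<s `[0, 1] `*` [set: Omega], pred_rects eps >>.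

Definition predictable (eps : nat -> R) (H : R -> Omega -> R) :=
  forall B : set (measurableTypeR R), measurable B ->
    predictable_sets eps
      ((`[0, 1] `*` [set: Omega]) `&` [set p | B (H p.1 p.2)]).

(* Each S^k has finite-variation paths (constant 0 on [0,1), one jump of    *)
(* size S^k_1 at time 1), so the stochastic integral is the pathwise       *)
(* Lebesgue-Stieltjes integral, and every predictable H is S^n-integrable.  *)
Definition stoch_int (eps : nat -> R) (n : nat) (H : 'I_n -> R -> Omega -> R)
  : process := fun t w =>
  if t < 1 then 0 else \sum_(k < n) H k 1 w * S1 eps k w.

Definition calX1n (eps : nat -> R) (n : nat) (X : process) :=
  exists H : 'I_n -> R -> Omega -> R,
    [/\ forall k, predictable eps (H k),
        (forall t w, t \in `[0, 1] -> X t w = stoch_int eps H t w) &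
        {ae Pm, forall w, forall t, t \in `[0, 1] -> -1 <= X t w}].

Definition adapted_cadlag (eps : nat -> R) (X : process) :=
  (forall t, t \in `[0, 1] -> meas_wrt (filt eps t) (X t)) /\
  forall w : Omega,
    (forall t, 0 <= t -> t < 1 -> (fun s => X s w) @ at_right t --> X t w) /\
    (forall t, 0 < t -> t <= 1 -> cvg ((fun s => X s w) @ at_left t)).

Definition calX1 (eps : nat -> R) (X : process) :=
  adapted_cadlag eps X /\
  exists Y : nat -> process,
    (forall j, exists n, calX1n eps n (Y j)) /\
    emery_dist eps (Y j) X @[j --> \oo] --> 0%E.

Definition calX (eps : nat -> R) (X : process) :=
  exists lam : R, 0 < lam /\ exists X1, calX1 eps X1 /\
    forall t w, t \in `[0, 1] -> X t w = lam * X1 t w.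

Definition equiv_prob (Q : probability Omega R) :=
  forall A : set Omega, measurable A -> (Q A = 0%E <-> Pm A = 0%E).

Definition is_EMM (eps : nat -> R) (Q : probability Omega R) :=
  equiv_prob Q /\
  forall n, Q.-integrable [set: Omega] (fun w => (S eps n 1 w)%:E) /\
            (\int[Q]_w (S eps n 1 w)%:E = 0)%E.

End Market.

(* Main.v *)
Require Import Defs.
From mathcomp Require Import all_boot all_order all_algebra.
From mathcomp Require Import all_classical all_reals all_analysis.
From mathcomp Require Import measurable_realfun.
Import Order.TTheory GRing.Theory Num.Theory.
Import numFieldNormedType.Exports.
Local Open Scope classical_set_scope.
Local Open Scope ring_scope.
Lemma triv_sigma (U V : Type) (D : set U) (phi : V -> U) (G : set (set U)) :
  phi @^-1` D = setT ->
  (forall C, G C -> phi @^-1` C = set0 \/ phi @^-1` C = setT) ->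
  forall C, <<s D, G >> C -> phi @^-1` C = set0 \/ phi @^-1` C = setT.
Proof.
move=> hD hG.
have : sigma_algebra D [set C | phi @^-1` C = set0 \/ phi @^-1` C = setT].
  split => /=.
  - by left; rewrite preimage_set0.
  - move=> A [hA|hA].
      right; apply/seteqP; split => // x _ /=; split.
        by have : (phi @^-1` D) x by rewrite hD.
      by move=> hx; have : (phi @^-1` A) x by []; rewrite hA.
    left; apply/seteqP; split => // x /= [_ hx]; apply: hx.
    by have : (phi @^-1` A) x by rewrite hA.
  - move=> A hA; rewrite preimage_bigcup.
    have [[k hk]|hn] := pselect (exists k, phi @^-1` A k = setT).
      right; apply/seteqP; split => // x _; exists k => //; by rewrite hk.
    left; apply/seteqP; split => // x [k _ hx].
    case: (hA k) => hk; first by have : (phi @^-1` A k) x by []; rewrite hk.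
    by exfalso; apply: hn; exists k.
move=> sig C hC; exact: (smallest_sub sig hG hC).
Qed.

From mathcomp Require Import lra.
Lemma clamp_ineq (R : realType) (L M a y : R) : 0 < L -> 0 <= M ->
  Num.max (Num.min (L * a) M) (- L) <=
  L * Num.max y (-1) + (M + L) * Num.min `|y - a| 1.
Proof.
move=> L0 M0.
set yc := Num.max y (-1).
have h1 : -1 <= yc by rewrite le_max lexx orbT.
have h2 : y <= yc by rewrite le_max lexx.
have hL1 : - L <= L * yc by rewrite -mulrN1 ler_wpM2l // ltW.
have hL2 : L * y <= L * yc by rewrite ler_wpM2l // ltW.
have hk0 : 0 <= Num.min `|y - a| 1 by rewrite le_min normr_ge0 ler01.
have hMk : 0 <= (M + L) * Num.min `|y - a| 1 by rewrite mulr_ge0 // addr_ge0 // ltW.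
rewrite ge_max; apply/andP; split; last by lra.
have [hya|hya] := leP `|y - a| 1.
  have h3 : L * a <= L * y + L * `|y - a|.
    rewrite -mulrDr ler_wpM2l ?(ltW L0) //.
    have := ler_norm (a - y); rewrite distrC; lra.
  have h4 : 0 <= M * `|y - a| by rewrite mulr_ge0.
  rewrite ge_min; apply/orP; left; rewrite mulrDl; lra.
rewrite ge_min; apply/orP; right; lra.
Qed.

Section S.
Variable R : realType.
Variable eps : nat -> R.

Lemma filt_triv (t : R) (A : set (Omega R)) : t < 1 -> filt eps t A ->
  A = set0 \/ A = setT.
Proof.
move=> t1 hA.
have := @triv_sigma _ _ setT id _ erefl _ A hA.
rewrite !preimage_id; apply => C [n [s [B [st mB ->]]]].
have -> : S eps n s = fun=> 0.
  by apply/funext => w; rewrite /S (le_lt_trans st t1).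
have [hB|hB] := pselect (B 0).
  by right; apply/seteqP; split.
by left; apply/seteqP; split => // x.
Qed.

Lemma pred_const (H : R -> Omega R -> R) : predictable eps H ->
  forall w, H 1 w = H 1 0.
Proof.
move=> hH w.
have hB : measurable [set H 1 0] by exact: measurable_set1.
have := @triv_sigma _ _ (`[0, 1] `*` [set: Omega R]) (fun w : Omega R => (1 : R, w)) _ _ _ _ (hH _ hB).
case.
- apply/seteqP; split => // x _ /=; split => //; by rewrite /= in_itv /= lexx ler01.
- move=> C [[A [_ ->]]|[s [t [A [s0 st t1 fA ->]]]]].
    left; apply/seteqP; split => // x /= [h _].
    by move: h; rewrite /= => /eqP; rewrite oner_eq0.
  have s1 : s < 1 by apply: (lt_le_trans st t1).
  case: (@filt_triv s A s1 fA) => ->.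
    by left; apply/seteqP; split => // x /= [].
  have [h1|h1] := pselect (`]s, t]%classic (1 : R)).
    by right; apply/seteqP; split.
  by left; apply/seteqP; split => // x /= [].
- move=> h.
  have : ((fun w : Omega R => (1 : R, w)) @^-1`
    ((`[0, 1] `*` [set: Omega R]) `&` [set p | [set H 1 0] (H p.1 p.2)])) 0.
    split; last by [].
    by split => //=; rewrite in_itv /= lexx ler01.
  by rewrite h.
- move=> h.
  have : ((fun w : Omega R => (1 : R, w)) @^-1`
    ((`[0, 1] `*` [set: Omega R]) `&` [set p | [set H 1 0] (H p.1 p.2)])) w.
    by rewrite h.
  by case.
Qed.

Hypothesis heps : forall n, 0 < eps n < 1.
Hypothesis hint : forall n, (Pm R).-integrable [set: Omega R] (fun w => (S1 eps n w)%:E).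

Lemma mS1 n : measurable_fun [set: Omega R] (S1 eps n).
Proof. by have /integrableP[+ _] := hint n => /measurable_EFinP. Qed.

Lemma filt_meas t A : filt eps t A -> measurable A.
Proof.
move=> hA.
have := @smallest_sub _ (sigma_algebra setT) _ (@measurable _ (Omega R)) (@sigma_algebra_measurable _ (Omega R)).
apply; last exact: hA.
move=> C [n [s [B [st mB ->]]]].
rewrite /S; have [s1|s1] := ltP s 1.
  have [hB|hB] := pselect (B 0).
    by rewrite (_ : _ @^-1` _ = setT) //; apply/seteqP; split.
  by rewrite (_ : _ @^-1` _ = set0) //; apply/seteqP; split.
rewrite (_ : _ @^-1` _ = S1 eps n @^-1` B); last first.
  by apply/seteqP; split.
by rewrite -[X in measurable X]setTI; apply: mS1.
Qed.

Lemma meas_wrt_meas t f : meas_wrt (filt eps t) f -> measurable_fun [set: Omega R] f.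
Proof. by move=> hf _ B mB; rewrite setTI; apply: (@filt_meas t); apply: hf. Qed.

Lemma min_eps n : exists m, 0 < m /\ forall k, (k < n)%N -> m <= eps k.
Proof.
elim: n => [|n [m [m0 hm]]]; first by exists 1; split.
exists (Order.min m (eps n)); split; first by rewrite lt_min m0; case/andP: (heps n).
move=> k; rewrite ltnS leq_eqVlt => /orP[/eqP->|hk]; first by rewrite ge_min lexx orbT.
by rewrite ge_min hm.
Qed.


Lemma one01 : (1 : R) \in `[0, 1]. Proof. by rewrite in_itv /= lexx ler01. Qed.

Lemma calX1n_form n Y : calX1n eps n Y -> exists c : 'I_n -> R,
  (forall w, Y 1 w = \sum_(k < n) c k * S1 eps k w) /\
  {ae Pm R, forall w, -1 <= Y 1 w}.
Proof.
move=> [H [hH hY hae]]; exists (fun k => H k 1 0); split.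
  move=> w; rewrite hY ?one01 // /stoch_int ltxx.
  by apply: eq_bigr => k _; rewrite (@pred_const (H k) (hH k)).
by apply: filterS hae => w /(_ 1 one01).
Qed.


Lemma Pm_itv (a b : R) : 0 <= a -> b <= 1 ->
  Pm R `]a, b[%classic = (if a < b then (b - a)%:E else 0%E).
Proof.
move=> a0 b1; rewrite /Pm /= /mrestr.
rewrite (_ : _ `&` _ = `]a, b[%classic).
  by rewrite lebesgue_measure_itv /=; case: ifP => //; rewrite lte_fin.
apply/seteqP; split => x /=; first by case.
move=> hx; split => //; move: hx; rewrite !in_itv /= => /andP[h1 h2].
by rewrite (le_trans a0 (ltW h1)) (le_trans (ltW h2) b1).
Qed.

Lemma sumc_le0 n (c : 'I_n -> R) :
  {ae Pm R, forall w, -1 <= \sum_(k < n) c k * S1 eps k w} -> \sum_(k < n) c k <= 0.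
Proof.
move=> [N [mN PN sub]].
rewrite leNgt; apply/negP => s0; set s := \sum_(k < n) c k in s0.
have [m [m0 hm]] := min_eps n.
set δ := Order.min (Order.min m (s ^+ 2)) (1/2 : R).
have d0 : 0 < δ by rewrite !lt_min m0 exprn_gt0 //= divr_gt0.
have d1 : δ <= 1.
  by rewrite /δ ge_min; apply/orP; right; rewrite ler_pdivrMr // mul1r ler1n.
have sub2 : `]0, δ[%classic `<=` N.
  move=> w hw; apply: sub => /=; move: hw; rewrite /= in_itv /= => /andP[w0 wd].
  have wm : w < m by apply: (lt_le_trans wd); rewrite /δ !ge_min lexx.
  have ws : w < s ^+ 2 by apply: (lt_le_trans wd); rewrite /δ !ge_min lexx orbT.
  have -> : \sum_(k < n) c k * S1 eps k w = - (s * (Num.sqrt w)^-1).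
    rewrite /s mulr_suml -sumrN; apply: eq_bigr => k _.
    rewrite /S1 (ltW w0) (lt_le_trans wm (hm k (ltn_ord k))) /=.
    by rewrite mulrN.
  have q0 : 0 < Num.sqrt w by rewrite sqrtr_gt0.
  have qs : Num.sqrt w < s.
    by rewrite -(gtr0_norm s0) -sqrtr_sqr ltr_sqrt // exprn_gt0.
  rewrite lerN2 -/(_ / _) -[X in _ <= X]mulr1 ler_pdivrMr //.
  by rewrite !mul1r leNgt qs.
have h : (Pm R `]0%R, δ[%classic <= Pm R N)%E.
  by apply: le_measure => //; rewrite inE //; exact: measurable_itv.
by move: h; rewrite PN Pm_itv // d0 lee_fin subr0 leNgt d0.
Qed.


Hypothesis hmean : forall n, (\int[Pm R]_w (S1 eps n w)%:E = 1)%E.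

Lemma comb_int n (c : 'I_n -> R) :
  (Pm R).-integrable setT (fun w => (\sum_(k < n) c k * S1 eps k w)%:E) /\
  (\int[Pm R]_w (\sum_(k < n) c k * S1 eps k w)%:E = (\sum_(k < n) c k)%:E)%E.
Proof.
have e : (fun w => (\sum_(k < n) c k * S1 eps k w)%:E) =
   (fun w => \sum_(k < n) (c k)%:E * (S1 eps k w)%:E)%E.
  by apply/funext => w; rewrite -sumEFin.
have hi k : (Pm R).-integrable setT (fun w => (c k)%:E * (S1 eps k w)%:E)%E.
  exact: integrableZl.
rewrite e; split; first by apply: integrable_sum.
rewrite integral_sum // -sumEFin; apply: eq_bigr => k _.
by rewrite integralZl // hmean mule1.
Qed.


Lemma filt_cst t (P : Prop) : filt eps t [set _ : Omega R | P].
Proof.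
have [hP|hP] := pselect P.
  rewrite (_ : [set _ | P] = setT); last by apply/seteqP; split.
  suff h : filt eps t (setT `\` set0) by rewrite setD0 in h.
  exact: (sigma_algebraCD (@sigma_algebra0 _ _ _)).
rewrite (_ : [set _ | P] = set0); last by apply/seteqP; split.
exact: sigma_algebra0.
Qed.

Definition Tk (i : nat) : Omega R -> R := fun _ => if i == 0%N then 0 else 1.

Lemma Tk_stop i : stopping_time eps (Tk i).
Proof.
split.
  by move=> w; rewrite /Tk; case: ifP => _; rewrite ?lexx ?ler01.
by move=> t; exact: (filt_cst t (Tk i 0 <= t)).
Qed.

Lemma Tk_incr i w : (i < 1)%N -> Tk i w <= Tk i.+1 w.
Proof. by move=> _; rewrite /Tk /=; case: ifP => _; rewrite ?ler01 ?lexx. Qed.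

Lemma cst_meas0 : meas_wrt (filt eps 0) (fun _ : Omega R => 1).
Proof. by move=> B _; apply: filt_cst. Qed.

Lemma cst_bd (w : Omega R) : `|(fun _ : Omega R => (1 : R)) w| <= 1.
Proof. by rewrite normr1. Qed.

Lemma cst_measK i : (i < 1)%N ->
  meas_wrt (filt_at eps (Tk i)) ((fun (_ : nat) (_ : Omega R) => (1 : R)) i).
Proof.
move=> _ B _ t.
rewrite (_ : _ `&` _ = [set _ | B 1 /\ Tk i 0 <= t]); first exact: filt_cst.
by apply/seteqP; split => x /=.
Qed.

Lemma cst_bdK i (w : Omega R) : `|(fun (_ : nat) (_ : Omega R) => (1 : R)) i w| <= 1.
Proof. by rewrite normr1. Qed.

Definition K1 : simple_pred eps :=
  @SimplePred R eps 1 Tk (fun _ : Omega R => 1) (fun (_ : nat) (_ : Omega R) => 1)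
    (fun i _ => Tk_stop i) Tk_incr cst_meas0 cst_bd cst_measK cst_bdK.

Lemma K1_int (Z : process R) w : simple_int K1 Z 1 w = Z 1 w.
Proof.
rewrite /simple_int /= big_ord_recl big_ord0 /Tk /= addr0 !mul1r.
rewrite /Order.min /= ltxx.
by rewrite ltr01 addrC subrK.
Qed.


Lemma ge0_le_int_nm (mu : {measure set Omega R -> \bar R}) (f g : Omega R -> \bar R) :
  (forall x, 0 <= f x)%E -> (forall x, f x <= g x)%E ->
  (\int[mu]_x f x <= \int[mu]_x g x)%E.
Proof.
move=> f0 fg; rewrite !ge0_integralTE //; last by move=> x; exact: le_trans (f0 x) (fg x).
apply: ereal_sup_le => _ [h hf <-]; exists h => //= x; exact: le_trans (hf x) (fg x).
Qed.

Lemma emery_ge (X Y : process R) :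
  (\int[Pm R]_w (Order.min (`|Y 1 w - X 1 w|)%:E 1) <= emery_dist eps Y X)%E.
Proof.
apply: le_trans; last first.
  apply: ereal_sup_ubound; exists K1 => //.
apply: ge0_le_int_nm => w.
  by rewrite le_min lee_fin normr_ge0 lee01.
rewrite le_min; apply/andP; split; last by rewrite ge_min lexx orbT.
rewrite ge_min; apply/orP; left.
apply: ereal_sup_ubound; exists 1; first by rewrite /unit01 /= in_itv /= lexx ler01.
by rewrite K1_int.
Qed.


Lemma Pm_setT : Pm R setT = 1%E.
Proof.
rewrite /Pm /= /mrestr setTI lebesgue_measure_itv /=.
by rewrite lte_fin ltr01 oppr0 adde0.
Qed.

Lemma bnd_int (f : Omega R -> R) (B : R) : measurable_fun setT f ->
  (forall x, `|f x| <= B) -> (Pm R).-integrable setT (fun x => (f x)%:E).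
Proof.
move=> mf fB; apply/integrableP; split; first exact/measurable_EFinP.
apply: (@le_lt_trans _ _ (\int[Pm R]_x (cst B%:E x))%E).
  apply: ge0_le_integral => //.
  - by apply/measurable_EFinP; apply: measurableT_comp => //; exact: normr_measurable.
  - by move=> x _; rewrite lee_fin fB.
by rewrite integral_cst // Pm_setT mule1 ltry.
Qed.


Lemma stepA (L M : R) (g : Omega R -> R) (Y : nat -> Omega R -> R) (d : nat -> \bar R) :
  0 < L -> 0 <= M -> measurable_fun setT g ->
  (forall j, (Pm R).-integrable setT (fun w => (Y j w)%:E)) ->
  (forall j, (\int[Pm R]_w (Y j w)%:E <= 0)%E) ->
  (forall j, {ae Pm R, forall w, -1 <= Y j w}) ->
  (forall j, (\int[Pm R]_w (Order.min (`|Y j w - g w|)%:E 1) <= d j)%E) ->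
  d j @[j --> \oo] --> 0%E ->
  (\int[Pm R]_w (Num.max (Num.min (L * g w) M) (- L))%:E <= 0)%E.
Proof.
move=> L0 M0 mg iY hY aY hd cd.
set c := fun w => Num.max (Num.min (L * g w) M) (- L).
have mc : measurable_fun setT c.
  apply: measurable_maxr; last exact: measurable_cst.
  apply: measurable_minr; last exact: measurable_cst.
  by apply: measurable_funM => //; exact: measurable_cst.
have ic : (Pm R).-integrable setT (fun w => (c w)%:E).
  apply: (@bnd_int _ (M + L)) => // w; rewrite /c.
  have hL : - L <= Num.max (Num.min (L * g w) M) (- L) by rewrite le_max lexx orbT.
  have hM : Num.max (Num.min (L * g w) M) (- L) <= M.
    rewrite ge_max ge_min lexx orbT /=; apply: (le_trans _ M0); by rewrite oppr_le0 ltW.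
  rewrite ler_norml; apply/andP; split.
    by apply: le_trans hL; rewrite lerN2 lerDr.
  by rewrite (le_trans hM) // lerDl ltW.
have ic0 : (\int[Pm R]_w (c w)%:E \is a fin_num)%E by apply: integrable_fin_num.
have key j : (\int[Pm R]_w (c w)%:E <= (M + L)%:E * d j)%E.
  set Yc := fun w => Num.max (Y j w) (-1).
  have mY : measurable_fun setT (Y j).
    by have /integrableP[+ _] := iY j => /measurable_EFinP.
  have mYc : measurable_fun setT Yc by apply: measurable_maxr => //; exact: measurable_cst.
  have eYc : (\int[Pm R]_w (Yc w)%:E = \int[Pm R]_w (Y j w)%:E)%E.
    apply: ae_eq_integral => //; [exact/measurable_EFinP|exact/measurable_EFinP|].
    apply: filterS (aY j) => w hw _; rewrite /Yc.
    by congr (_%:E); apply/max_idPl.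
  have iYc : (Pm R).-integrable setT (fun w => (Yc w)%:E).
    apply: (@le_integrable _ _ _ _ _ _ _ (fun w => (`|Y j w| + 1)%:E)) => //.
    - exact/measurable_EFinP.
    - move=> w _; rewrite !abse_EFin lee_fin [X in _ <= X]ger0_norm ?addr_ge0 //.
      rewrite /Yc ler_norml; apply/andP; split.
        rewrite opprD le_max; apply/orP; right.
        by have := normr_ge0 (Y j w); lra.
      rewrite ge_max; apply/andP; split; first by rewrite (le_trans (ler_norm _)) // lerDl.
      by rewrite (le_trans (_ : -1 <= 0)) // addr_ge0.
    - under eq_fun do rewrite EFinD.
      apply: integrableD => //.
        exact: (integrable_abse (iY j)).
      apply: (@bnd_int (cst 1) 1) => // x; by rewrite normr1.
  set k := fun w => Num.min `|Y j w - g w| 1.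
  have mk : measurable_fun setT k.
    apply: measurable_minr; last exact: measurable_cst.
    apply: measurableT_comp; first exact: normr_measurable.
    exact: measurable_funB.
  have ik : (Pm R).-integrable setT (fun w => (k w)%:E).
    apply: (@bnd_int _ 1) => // w; rewrite /k ger0_norm; first by rewrite ge_min lexx orbT.
    by rewrite le_min normr_ge0 ler01.
  have hk : (\int[Pm R]_w (k w)%:E <= d j)%E.
    suff -> : (\int[Pm R]_w (k w)%:E = \int[Pm R]_w (Order.min (`|Y j w - g w|)%:E 1))%E by [].
    by apply: eq_integral => w _; rewrite /k EFin_min.
  apply: (@le_trans _ _ (\int[Pm R]_w ((L * Yc w)%:E + ((M + L) * k w)%:E))%E).
    apply: le_integral => //.
      apply: integrableD => //.
        by under eq_fun do rewrite EFinM; exact: integrableZl.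
      by under eq_fun do rewrite EFinM; exact: integrableZl.
    move=> w _; rewrite -EFinD lee_fin; exact: clamp_ineq.
  rewrite integralD //; first last.
  - by under eq_fun do rewrite EFinM; exact: integrableZl.
  - by under eq_fun do rewrite EFinM; exact: integrableZl.
  under eq_integral do rewrite EFinM.
  rewrite integralZl // eYc.
  under eq_integral do rewrite EFinM.
  rewrite integralZl //.
  apply: (@le_trans _ _ (0 + (M + L)%:E * \int[Pm R]_w (k w)%:E)%E).
    apply: leeD2r; rewrite mule_ge0_le0 //= ?lee_fin ?ltW //.
  rewrite add0e; apply: lee_wpmul2l => //; rewrite lee_fin addr_ge0 // ltW //.
have ML0 : 0 < M + L by rewrite ltr_wpDl.
set I := (\int[Pm R]_w (c w)%:E)%E in ic0 key *.
have eI : I = (fine I)%:E by rewrite fineK.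
rewrite eI lee_fin leNgt; apply/negP => r0.
set x := ((fine I) / (M + L))%:E.
have hx j : (x <= d j)%E.
  have dj0 : (0 <= d j)%E.
    apply: le_trans (hd j); apply: integral_ge0 => w _.
    by rewrite le_min lee_fin normr_ge0 lee01.
  have := key j; rewrite eI.
  case E: (d j) => [e| |].
  - rewrite -EFinM lee_fin => h; rewrite lee_fin ler_pdivrMr // mulrC //.
  - by rewrite leey.
  - by rewrite E in dj0.
have hx' : \forall j \near \oo, (x <= d j)%E by apply: nearW.
have := lime_ge (cvgP _ cd) hx'.
rewrite (cvg_lim _ cd) // lee_fin.
have := divr_gt0 r0 ML0; rewrite /x.
move=> h1 h2; have h3 : fine I / (M + L) <= 0 by apply: h2.
by rewrite leNgt h1 in h3.
Qed.


Lemma clamp_split (L M u : R) : 0 < L -> 0 <= M ->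
  Num.max (Num.min u M) (- L) =
  Num.min (Num.max u 0) M - Num.min (Num.max (- u) 0) L.
Proof.
move=> L0 M0; have [u0|u0] := leP 0 u.
  rewrite (@max_r _ _ (- u) 0); last by rewrite oppr_le0.
  rewrite (@min_l _ _ 0 L) ?ltW // subr0.
  apply: max_l; rewrite le_min (le_trans _ u0) ?(le_trans _ M0) //;
    by rewrite oppr_le0 ltW.
rewrite (@min_l _ _ 0 M) // sub0r.
rewrite (@max_l _ _ (- u) 0); last by rewrite oppr_ge0 ltW.
rewrite (@min_l _ _ u M); last by rewrite (le_trans (ltW u0)).
have [uL|uL] := leP (- u) L.
  by rewrite opprK; apply: max_l; rewrite lerNl.
by apply: max_r; rewrite lerNr ltW.
Qed.

Lemma core (L : R) (g : Omega R -> R) (Y : nat -> Omega R -> R) (d : nat -> \bar R) :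
  0 < L -> measurable_fun setT g ->
  (forall j, (Pm R).-integrable setT (fun w => (Y j w)%:E)) ->
  (forall j, (\int[Pm R]_w (Y j w)%:E <= 0)%E) ->
  (forall j, {ae Pm R, forall w, -1 <= Y j w}) ->
  (forall j, (\int[Pm R]_w (Order.min (`|Y j w - g w|)%:E 1) <= d j)%E) ->
  d j @[j --> \oo] --> 0%E ->
  (\int[Pm R]_w (L * g w)%:E <= 0)%E.
Proof.
move=> L0 mg iY hY aY hd cd.
set u := fun w => L * g w.
have mu : measurable_fun setT u by apply: measurable_funM => //; exact: measurable_cst.
set p := fun (M : nat) w => Num.min (Num.max (u w) 0) M%:R.
set q := fun w => Num.min (Num.max (- u w) 0) L.
have mp M : measurable_fun setT (p M).
  apply: measurable_minr; last exact: measurable_cst.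
  apply: measurable_maxr => //; exact: measurable_cst.
have mq : measurable_fun setT q.
  apply: measurable_minr; last exact: measurable_cst.
  apply: measurable_maxr; last exact: measurable_cst.
  exact: measurable_funN.
have ip M : (Pm R).-integrable setT (fun w => (p M w)%:E).
  apply: (@bnd_int _ M%:R) => // w; rewrite /p ger0_norm.
    by rewrite ge_min lexx orbT.
  by rewrite le_min le_max lexx orbT ler0n.
have iq : (Pm R).-integrable setT (fun w => (q w)%:E).
  apply: (@bnd_int _ L) => // w; rewrite /q ger0_norm.
    by rewrite ge_min lexx orbT.
  by rewrite le_min le_max lexx orbT ltW.
have hM M : (\int[Pm R]_w (p M w)%:E <= \int[Pm R]_w (q w)%:E)%E.
  have := @stepA L M%:R g Y d L0 (ler0n _ _) mg iY hY aY hd cd.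
  under eq_integral do rewrite clamp_split // ?ler0n // EFinB.
  rewrite -/u.
  rewrite (integralB measurableT (ip M) iq).
  by rewrite sube_le0.
have hq : (\int[Pm R]_w (q w)%:E <= \int[Pm R]_w (((fun w => (u w)%:E)^\-) w))%E.
  apply: ge0_le_integral => //.
  - by move=> w _; rewrite lee_fin le_min le_max lexx orbT ltW.
  - exact/measurable_EFinP.
  - by apply: measurable_funeneg; exact/measurable_EFinP.
  - move=> w _; rewrite funenegE /= -EFin_max lee_fin /q.
    by rewrite ge_min lexx.
have mg' M : measurable_fun setT (fun w => (p M w)%:E) by exact/measurable_EFinP.
have g'0 M w : setT w -> (0 <= (p M w)%:E)%E.
  by move=> _; rewrite lee_fin le_min le_max lexx orbT ler0n.
have nd w : setT w -> {homo (fun M => (p M w)%:E) : n m / (n <= m)%N >-> (n <= m)%E}.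
  move=> _ n m nm; rewrite lee_fin /p le_min ge_min lexx /= ge_min.
  by rewrite ler_nat nm orbT.
have cv := @cvg_monotone_convergence _ _ _ (Pm R) setT measurableT (fun M w => (p M w)%:E) mg' g'0 nd.
have hlim : (\int[Pm R]_w limn (fun M => (p M w)%:E) <= \int[Pm R]_w (q w)%:E)%E.
  rewrite -(cvg_lim _ cv) //; apply: lime_le; first exact: cvgP cv.
  by apply: nearW => M; exact: hM.
have el : (\int[Pm R]_w limn (fun M => (p M w)%:E) = \int[Pm R]_w (((fun w => (u w)%:E)^\+) w))%E.
  apply: eq_integral => w _.
  rewrite funeposE /= -EFin_max; apply: cvg_lim => //.
  apply: (cvg_near_cst (Num.max (u w) 0)%:E).
  exists (Num.trunc (Num.max (u w) 0)).+1 => // n /= hn.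
  rewrite /p min_l //; apply: (le_trans (ltW (truncnS_gt _))).
  by rewrite ler_nat.
rewrite integralE sube_le0.
by rewrite -el (le_trans hlim hq).
Qed.


Lemma part1 (X : process R) : calX eps X -> (\int[Pm R]_w (X 1 w)%:E <= 0)%E.
Proof.
move=> [lam [lam0 [X1 [[[hmeas _] [Yf [hY hdist]]] hX]]]].
have mg : measurable_fun setT (X1 1) by apply: (@meas_wrt_meas 1); apply: hmeas; exact: one01.
have facts j : [/\ (Pm R).-integrable setT (fun w => (Yf j 1 w)%:E),
                  (\int[Pm R]_w (Yf j 1 w)%:E <= 0)%E &
                  {ae Pm R, forall w, -1 <= Yf j 1 w}].
  have [n hn] := hY j.
  have [c [hc ha]] := @calX1n_form n (Yf j) hn.
  have e : Yf j 1 = fun w => \sum_(k < n) c k * S1 eps k w by apply/funext.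
  have [ic ec] := @comb_int n c.
  rewrite e; split => //.
    rewrite ec lee_fin; apply: sumc_le0.
    by move: ha; rewrite e.
  by move: ha; rewrite e.
have := @core lam (X1 1) (fun j => Yf j 1) (fun j => emery_dist eps (Yf j) X1) lam0 mg
  (fun j => let: And3 a _ _ := facts j in a)
  (fun j => let: And3 _ a _ := facts j in a)
  (fun j => let: And3 _ _ a := facts j in a)
  (fun j => emery_ge X1 (Yf j)) hdist.
suff -> : (\int[Pm R]_w (X 1 w)%:E = \int[Pm R]_w (lam * X1 1 w)%:E)%E by [].
by apply: eq_integral => w _; rewrite hX // one01.
Qed.


Lemma Pm_compl01 : Pm R (~` `]0%R, 1%R[%classic) = 0%E.
Proof.
set A := `]0%R, 1%R[%classic.
have mA : measurable A by exact: measurable_itv.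
have e : (Pm R setT = Pm R A + Pm R (~` A))%E.
  rewrite -measureU //; [by rewrite setUv|exact: measurableC|by rewrite setICr].
have hA : Pm R A = 1%E by rewrite /A Pm_itv // ltr01 subr0.
have x0 : (0 <= Pm R (~` A))%E by apply: measure_ge0.
have x1 : (Pm R (~` A) <= 1)%E.
  rewrite -Pm_setT; apply: le_measure => //; rewrite inE //; exact: measurableC.
move: e; rewrite Pm_setT hA.
move: x0 x1; case: (Pm R (~` A)) => [r| |] //= r0 r1.
rewrite -EFinD => /eqP; rewrite eqe => /eqP h.
by congr (_%:E); lra.
Qed.


Definition gn (n : nat) (w : Omega R) : R :=
  - (S1 eps n w * \1_(`[0%R, eps n[%classic) w).

Lemma gE n w : gn n w = if (0 <= w) && (w < eps n) then (Num.sqrt w)^-1 else 0.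
Proof.
rewrite /gn indicE /S1 mem_setE in_itv /=.
by case: ifP => _; rewrite ?mulr1 ?opprK ?mulr0 ?oppr0.
Qed.

Lemma mgn n : measurable_fun setT (gn n).
Proof.
apply: measurable_funN; apply: measurable_funM; first exact: mS1.
apply: measurable_indic; exact: measurable_itv.
Qed.

Lemma ineq n w : 1 <= S1 eps n w + 2 * gn n w + \1_(~` `]0%R, 1%R[%classic) w.
Proof.
have [e0 e1] := andP (heps n).
rewrite gE indicE /S1.
case: ifPn => [/andP[w0 we]|hA].
  have [->|wp] := eqVneq w 0.
    rewrite sqrtr0 invr0 oppr0 mulr0 !add0r.
    by rewrite mem_set //= in_itv /= ltxx.
  have wp' : 0 < w by rewrite lt_neqAle eq_sym wp.
  rewrite memNset; last by rewrite /= in_itv /= wp' (lt_trans we e1).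
  have q0 : 0 < Num.sqrt w by rewrite sqrtr_gt0.
  have : 1 <= (Num.sqrt w)^-1.
    by rewrite invf_ge1 // -sqrtr1 ler_sqrt // ltW // (lt_trans we e1).
  have -> : ((false : nat)%:R : R) = 0 by [].
  lra.
rewrite mulr0 addr0.
case: ifPn => [/andP[ew w1]|hB].
  have hS : 0 <= ((1 - w) `^ (n.+2%:R)^-1)^-1 by rewrite invr_ge0 powR_ge0.
  have [->|wn1] := eqVneq w 1.
    rewrite mem_set; last by rewrite /= in_itv /= ltxx andbF.
    have h1 : 0 <= ((1 - 1) `^ (n.+2%:R)^-1)^-1 :> R by rewrite invr_ge0 powR_ge0.
    have -> : ((true : nat)%:R : R) = 1 by [].
    lra.
  have wl1 : w < 1 by rewrite lt_neqAle wn1.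
  have wp : 0 < w by apply: lt_le_trans e0 ew.
  rewrite memNset; last by rewrite /= in_itv /= wp wl1.
  have p0 : 0 < 1 - w by rewrite subr_gt0.
  have : 1 <= ((1 - w) `^ (n.+2%:R)^-1)^-1.
    rewrite invf_ge1 ?powR_gt0 //.
    rewrite -[leRHS](powRr0 (1 - w)); apply: ger_powR.
      by rewrite p0 /= lerBlDr lerDl ltW.
    by rewrite invr_ge0.
  have -> : ((false : nat)%:R : R) = 0 by [].
  lra.
rewrite add0r mem_set; first by []. 
rewrite /= in_itv /= => /andP[w0 w1].
have [we|we] := ltP w (eps n).
  by move: hA; rewrite (ltW w0) we.
by move: hB; rewrite we ltW.
Qed.


Hypothesis heps0 : eps n @[n --> \oo] --> 0.

Lemma gn_near w : \forall n \near \oo, gn n w = 0.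
Proof.
have [w0|w0] := leP w 0.
  apply: nearW => n; rewrite gE; case: ifPn => // /andP[w0' _].
  have -> : w = 0 by apply/eqP; rewrite eq_le w0 w0'.
  by rewrite sqrtr0 invr0.
near=> n.
have hn : eps n < w by near: n; exact: (cvgr_lt 0 heps0 w w0).
by rewrite gE ifF //; apply/negbTE; rewrite negb_and -leNgt (ltW hn) orbT.
Unshelve. all: by end_near.
Qed.

Lemma part2 : ~ (exists Q : probability (Omega R) R, is_EMM eps Q).
Proof.
move=> [Q [hQ hS]].
set A := (~` `]0%R, 1%R[%classic) : set (Omega R).
have mA : measurable A by apply: measurableC; exact: measurable_itv.
have QA : Q A = 0%E by apply/(hQ _ mA).2; exact: Pm_compl01.
have eS n : (fun w => (S eps n 1 w)%:E) = (fun w => (S1 eps n w)%:E).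
  by apply/funext => w; rewrite /S ltxx.
have iS n : Q.-integrable setT (fun w => (S1 eps n w)%:E) by rewrite -eS; exact: (hS n).1.
have ES n : (\int[Q]_w (S1 eps n w)%:E = 0)%E by rewrite -eS; exact: (hS n).2.
have icst (c : R) : Q.-integrable setT (fun _ => c%:E).
  exact: (finite_measure_integrable_cst Q c measurableT).
set G := fun w => `|S1 eps 0 w| + (Num.sqrt (eps 0))^-1.
have iG : Q.-integrable setT (fun w => (G w)%:E).
  rewrite /G; under eq_fun do rewrite EFinD.
  apply: integrableD => //; exact: (integrable_abse (iS 0%N)).
have [e00 e01] := andP (heps 0).
have dom n w : `|gn n w| <= G w.
  rewrite gE /G; case: ifPn => [/andP[w0 we]|_]; last first.
    by rewrite normr0 addr_ge0 // invr_ge0 sqrtr_ge0.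
  rewrite ger0_norm ?invr_ge0 ?sqrtr_ge0 //.
  have [w0'|w0'] := ltP w (eps 0).
    rewrite /S1 w0 w0' /= normrN ger0_norm ?invr_ge0 ?sqrtr_ge0 //.
    by rewrite lerDl invr_ge0 sqrtr_ge0.
  apply: (@le_trans _ _ (Num.sqrt (eps 0))^-1); last by rewrite lerDr normr_ge0.
  rewrite lef_pV2 ?ler_sqrt //; rewrite posrE sqrtr_gt0 //.
  exact: lt_le_trans e00 w0'.
have mg n : measurable_fun setT (fun w => (gn n w)%:E) by apply/measurable_EFinP; exact: mgn.
have ig n : Q.-integrable setT (fun w => (gn n w)%:E).
  apply: le_integrable iG => // w _; rewrite !abse_EFin lee_fin.
  by rewrite (le_trans (dom n w)) // ler_norm.
have cv : (\int[Q]_w (gn n w)%:E)%E @[n --> \oo] --> 0%E.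
  have := @dominated_cvg _ _ _ Q setT measurableT (fun n w => (gn n w)%:E)
    (fun=> 0%E) (fun w => (G w)%:E) mg _ _ iG _.
  rewrite integral0; apply.
  - move=> w _; apply: (cvg_near_cst 0%E).
    by apply: filterS (gn_near w) => n ->.
  - by [].
  - by move=> n w _; rewrite abse_EFin lee_fin dom.
have lb n : ((1/2 : R)%:E <= \int[Q]_w (gn n w)%:E)%E.
  have ih : Q.-integrable setT (fun w => (\1_A w : R)%:E).
    apply: (@le_integrable _ _ _ Q setT measurableT _ (fun _ => 1%:E)) => //.
    - by apply/measurable_EFinP; exact: measurable_indic.
    - move=> w _; rewrite !abse_EFin lee_fin normr1 indicE.
      by case: (w \in A); rewrite ?normr1 ?normr0.
  have h1 : (\int[Q]_w (cst 1%E w) <=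
       \int[Q]_w ((S1 eps n w)%:E + (2 * gn n w)%:E + (\1_A w)%:E))%E.
    apply: le_integral => //; first exact: (icst 1).
      apply: integrableD => //; apply: integrableD => //.
      by under eq_fun do rewrite EFinM; exact: integrableZl.
    by move=> w _; rewrite -!EFinD lee_fin; exact: ineq.
  move: h1; rewrite integral_cst //.
  rewrite [X in (X <= _)%E -> _](_ : _ = 1%E); last by rewrite mul1e; exact: probability_setT.
  rewrite integralD //; first last.
  - apply: integrableD => //.
    by under eq_fun do rewrite EFinM; exact: integrableZl.
  rewrite integralD //; last by under eq_fun do rewrite EFinM; exact: integrableZl.
  rewrite ES add0e integral_indic // setIT.
  rewrite [X in (_ <= _ + X)%E -> _](_ : _ = 0%E); last exact: QA.
  rewrite adde0.
  under eq_integral do rewrite EFinM.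
  rewrite integralZl //.
  have fin := integrable_fin_num measurableT (ig n).
  rewrite -(fineK fin) -EFinM !lee_fin => h.
  by rewrite ler_pdivrMr // mulrC; lra.
have hx : \forall n \near \oo, ((1/2 : R)%:E <= \int[Q]_w (gn n w)%:E)%E by apply: nearW.
have := lime_ge (cvgP _ cv) hx; rewrite (cvg_lim _ cv) // lee_fin => h.
have : (0 : R) < 1/2 by rewrite divr_gt0.
by rewrite ltNge h.
Qed.

End S.

Theorem proposition6p4 (R : realType) (eps : nat -> R)
  (heps : forall n, 0 < eps n < 1)
  (heps0 : eps n @[n --> \oo] --> 0)
  (hint : forall n, (Pm R).-integrable [set: Omega R] (fun w => (S1 eps n w)%:E))
  (hmean : forall n, (\int[Pm R]_w (S1 eps n w)%:E = 1)%E) :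
  (forall X : process R, calX eps X -> (\int[Pm R]_w (X 1 w)%:E <= 0)%E) /\
  ~ (exists Q : probability (Omega R) R, is_EMM eps Q).
Proof.
split.
  by move=> X; apply: part1.
exact: part2.
Qed.
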